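(* Let $(X,T)$ be a dynamical system. Then for every $\delta>0$ the family $\mathcal{S}_T(\delta)$ is $+$ invariant. Furthermore, the following are equivalent: (1) $(X,T)$ is transitively sensitive; (2) there exist $\delta>0$ and a dense $G_\delta$ subset $X_0\subset X$ such that $\omega_{\mathcal{S}_T(\delta)}(x)=X$ for each $x\in X_0$; (3) there exist $\delta>0$ and $x\in X$ with $\omega_{\mathcal{S}_T(\delta)}(x)=X$.
   Context: A dynamical system $(X,T)$: $X$ is a compact metric space (metric $d$) with more than one point and without isolated points, $T:X\to X$ a continuous surjection. ''Opene'' means open and nonempty. $S_T(U,\delta)=\{n\in\mathbb{Z}_+:\exists x_1,x_2\in U,\ d(T^nx_1,T^nx_2)>\delta\}$, $N_T(U,V)=\{n\in\mathbb{Z}_+:U\cap T^{-n}V\neq\varnothing\}$. $\mathcal{S}_T(\delta)$ is the family of all subsets of $\mathbb{Z}_+$ containing $S_T(U,\delta)$ for some opene $U$. For a family $\mathcal{F}$, $\omega_{\mathcal{F}}(x)=\bigcap_{F\in\mathcal{F}}\overline{\{T^ix:i\in F\}}$. A family $\mathcal{F}$ is $+$ invariant if for every $i\in\mathbb{Z}_+$, $F\in\mathcal{F}$ implies $\{i+j:j\in F\}\in\mathcal{F}$. $(X,T)$ is transitively sensitive if there is $\delta>0$ with $S_T(W,\delta)\cap N_T(U,V)\neq\varnothing$ for all opene $U,V,W\subset X$. *)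

(* Defs.v *)
From HB Require Import structures.
From mathcomp Require Import all_boot all_order all_algebra.
From mathcomp Require Import all_classical all_reals all_analysis.
From mathcomp Require Import borel_hierarchy.
Set Implicit Arguments. Unset Strict Implicit. Unset Printing Implicit Defensive.
Import Order.TTheory GRing.Theory Num.Theory.
Local Open Scope classical_set_scope.
Local Open Scope ring_scope.

Section Dyn.
Context {R : realType} {X : metricType R}.

Definition opene (U : set X) := open U /\ U !=set0.

Definition S_T (T : X -> X) (U : set X) (delta : R) : set nat :=
  [set n | exists x1 x2, U x1 /\ U x2 /\
     delta < mdist (iter n T x1) (iter n T x2)].

Definition N_T (T : X -> X) (U V : set X) : set nat :=
  [set n | U `&` (iter n T) @^-1` V !=set0].

Definition SF (T : X -> X) (delta : R) : set (set nat) :=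
  [set F | exists U, opene U /\ S_T T U delta `<=` F].

Definition omegaF (T : X -> X) (F : set (set nat)) (x : X) : set X :=
  \bigcap_(A in F) closure ((fun i => iter i T x) @` A).

Definition trans_sensitive (T : X -> X) :=
  exists2 delta : R, 0 < delta & forall U V W : set X,
    opene U -> opene V -> opene W -> S_T T W delta `&` N_T T U V !=set0.

End Dyn.

Definition plus_invariant (F : set (set nat)) :=
  forall (i : nat) (A : set nat), F A -> F [set (i + j)%N | j in A].

(* Main.v *)
Require Import Defs.
From HB Require Import structures.
From mathcomp Require Import all_boot all_order all_algebra.
From mathcomp Require Import all_classical all_reals all_analysis.
From mathcomp Require Import borel_hierarchy.
Import Order.TTheory GRing.Theory Num.Theory.
Local Open Scope classical_set_scope.
Local Open Scope ring_scope.

From mathcomp Require Import lra.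
Import Order.TTheory GRing.Theory Num.Theory.
Local Open Scope classical_set_scope.
Local Open Scope ring_scope.

Definition ptT {R : realType} (X : pseudoMetricType R) (x0 : X) : Type := X.
HB.instance Definition _ (R : realType) (X : pseudoMetricType R) (x0 : X) :=
  PseudoMetric.on (@ptT R X x0).
HB.instance Definition _ (R : realType) (X : pseudoMetricType R) (x0 : X) :=
  isPointed.Build (@ptT R X x0) x0.

Lemma cpt_sc {R : realType} (X : pseudoMetricType R) (x0 : X) :
  compact [set: X] -> @second_countable X.
Proof.
move=> c.
have := @compact_second_countable R (@ptT R X x0) c.
exact.
Qed.

Section Aux.
Context {R : realType} {X : metricType R} (T : X -> X).
Hypothesis hcont : continuous T.
Hypothesis hsurj : forall y : X, exists x : X, T x = y.

Lemma iter_cont n : continuous (iter n T).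
Proof.
elim: n => [|n IH] x /=; first exact: cvg_id.
exact: (continuous_comp (IH x) (hcont _)).
Qed.

Lemma iter_surj n y : exists x, iter n T x = y.
Proof.
elim: n y => [|n IH] y; first by exists y.
have [z <-] := hsurj y; have [x <-] := IH z; by exists x.
Qed.

Lemma S_T_sub U V d : U `<=` V -> S_T T U d `<=` S_T T V d.
Proof.
by move=> UV n [x1 [x2 [U1 [U2 h]]]]; exists x1, x2; split; [apply: UV|split; [apply: UV|]].
Qed.

Lemma shift_lemma d i U : 0 < d -> opene U ->
  exists U', opene U' /\ forall n, S_T T U' d n -> (i <= n)%N /\ S_T T U d (n - i)%N.
Proof.
move=> d0 [oU [u Uu]].
have [x0 x0u] := iter_surj i u.
have d2 : 0 < d / 2 by rewrite divr_gt0.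
have nP : forall m, nbhs x0 [set y | forall k, (k < m)%N ->
    ball (iter k T x0) (d / 2) (iter k T y)].
  elim=> [|m IH]; first by apply: nearW => y k.
  have hm : nbhs x0 (iter m T @^-1` ball (iter m T x0) (d / 2)).
    exact: (iter_cont m x0) (nbhsx_ballx _ _ d2).
  apply: filterS (filterI IH hm) => y [h1 h2] k; rewrite ltnS leq_eqVlt.
  by case/orP => [/eqP -> //|/h1].
have := nP i; rewrite nbhsE => -[B [oB Bx0] BP].
exists (B `&` (iter i T @^-1` U)); split.
  split; last by exists x0; split => //; rewrite /= x0u.
  apply: openI => //; apply: open_comp => // x _; exact: iter_cont.
move=> n [x1 [x2 [[B1 U1] [[B2 U2] h]]]].
case: (leqP i n) => [le_in|lt_ni].
  split => //; exists (iter i T x1), (iter i T x2); split => //; split => //.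
  by rewrite -!iterD subnK.
exfalso.
have := BP _ B1 _ lt_ni; have := BP _ B2 _ lt_ni; rewrite !ballEmdist /= => h2 h1.
have t := metric_triangle (iter n T x1) (iter n T x0) (iter n T x2).
rewrite metric_sym in h1.
lra.
Qed.

End Aux.
Lemma cpt_baire {R : realType} {X : metricType R} (F : (set X)^nat) :
  compact [set: X] -> (forall i, open (F i) /\ dense (F i)) ->
  dense (\bigcap_i F i).
Proof.
move=> cpt odF D D0 oD.
have step : forall p : nat * set X, exists B : set X,
    (open p.2 /\ p.2 !=set0) -> [/\ open B, B !=set0 & closure B `<=` p.2 `&` F p.1].
  move=> [k A]; have [[oA A0]|nh] := pselect (open A /\ A !=set0); last first.
    by exists setT => h; exfalso; exact: nh.
  have [a [Aa Fa]] := (odF k).2 A A0 oA.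
  have oAF : open (A `&` F k) by apply: openI => //; exact: (odF k).1.
  have /nbhs_ballP[e e0 ballA] : nbhs a (A `&` F k).
    by apply: open_nbhs_nbhs; split.
  have e2 : 0 < e / 2 by rewrite divr_gt0.
  exists (ball a (e / 2))° => _; split.
  - exact: open_interior.
  - by exists a; exact: nbhsx_ballx.
  - move=> p /(closureS (@interior_subset _ _)) cl.
    have [z [az pz]] := cl _ (nbhsx_ballx p _ e2).
    apply: ballA; rewrite [e]splitr; apply: (ball_triangle az).
    exact: ball_sym.
have [g hg] := choice step.
pose fix Dn n := if n is m.+1 then g (m, Dn m) else D.
have Dok : forall n, open (Dn n) /\ Dn n !=set0.
  elim=> [|n [Ho Hn]]; first by split.
  by have [] := hg (n, Dn n) (conj Ho Hn).
have Dcl : forall n, closure (Dn n.+1) `<=` Dn n `&` F n.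
  by move=> n; have [] := hg (n, Dn n) (Dok n).
have Ddec : forall n m, (n <= m)%N -> Dn m `<=` Dn n.
  move=> n m; elim: m => [|m IH]; first by rewrite leqn0 => /eqP ->.
  rewrite leq_eqVlt => /orP[/eqP -> //|/IH]; apply: subset_trans.
  by move=> x /subset_closure /Dcl [].
pose G := filter_from [set: nat] Dn.
have FG : Filter G.
  apply: filter_from_filter; first by exists 0%N.
  move=> i j _ _; exists (maxn i j) => // x Dx; split.
    by apply: (Ddec i (maxn i j)) => //; rewrite leq_maxl.
  by apply: (Ddec j (maxn i j)) => //; rewrite leq_maxr.
have PG : ProperFilter G.
  by apply: filter_from_proper => // i _; exact: (Dok i).2.
have h1 := cpt G. have h2 := h1 PG. have h3 := h2 (@filterT _ G FG). case: h3 => p [_ clp].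
have inc : forall n, closure (Dn n) p.
  move=> n B nB; apply: (clp (Dn n) B) => //; by exists n.
have := Dcl 0%N p (inc 1%N) => -[Dp _].
exists p; split => // n _.
by have [] := Dcl n p (inc n.+1).
Qed.
Lemma ts_to_dense {R : realType} {X : metricType R} (T : X -> X) (x0 : X) :
  compact [set: X] -> continuous T -> trans_sensitive T ->
  exists2 delta : R, 0 < delta & exists X0 : set X,
       [/\ Gdelta X0, dense X0 & forall x, X0 x -> omegaF T (SF T delta) x = [set: X]].
Proof.
move=> cpt hcont [d d0 H]; exists d => //.
have [B cB [Bo Bb]] := @cpt_sc R X x0 cpt.
have [f finj] := countable_injP _ cB.
pose code (W V : set X) := choice.pickle (f W, f V).
pose P m W V := [/\ B W, B V, W !=set0, V !=set0 & code W V = m].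
pose G m := [set x | (exists W V, P m W V /\ exists n, S_T T W d n /\ V (iter n T x))
   \/ ~ (exists W V, P m W V)].
have oG : forall m, open (G m).
  move=> m; rewrite openE /= => x; rewrite {1}/G /= => -[[W [V [PWV [n [Sn Vx]]]]]|nP].
    have oV : open V by case: PWV => _ BV _ _ _; exact: Bo.
    have : nbhs x (iter n T @^-1` V).
      exact: (@iter_cont R X T hcont n x) (open_nbhs_nbhs (conj oV Vx)).
    apply: filterS => y Vy; left; exists W, V; split => //; by exists n.
  by apply: nearW => y; right.
have dG : forall m, dense (G m).
  move=> m O O0 oO; have [[W [V PWV]]|nP] := pselect (exists W V, P m W V).
    have [BW BV W0 V0 _] := PWV.
    have [n [Sn [y [Oy Vy]]]] := H O V W (conj oO O0) (conj (Bo _ BV) V0) (conj (Bo _ BW) W0).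
    exists y; split => //; left; exists W, V; split => //; by exists n.
  by have [y Oy] := O0; exists y; split => //; right.
exists (\bigcap_m G m); split.
- by exists G.
- by apply: cpt_baire => // i; split.
move=> x X0x; apply/seteqP; split => // y _ A [U [[oU [u Uu]] SA]] N Ny.
have [W [BW Wu] WU] : exists2 W, (B W /\ W u) & W `<=` U.
  have := Bb u U (open_nbhs_nbhs (conj oU Uu)).
  by move=> [W [BW Wu] WU]; exists W.
have [V [BV Vy] VN] : exists2 V, (B V /\ V y) & V `<=` N.
  have := Bb y N Ny.
  by move=> [V [BV Vy] VN]; exists V.
have := X0x (code W V) I => -[[W' [V' [[BW' BV' _ _ c] [n [Sn Vn]]]]]|nP]; last first.
  by exfalso; apply: nP; exists W, V; split => //; [exists u|exists y].
have [eW eV] : W' = W /\ V' = V.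
  have /(pcan_inj choice.pickleK) [e1 e2] := c.
  by split; apply: finj => //; rewrite inE.
subst W' V'.
exists (iter n T x); split; last exact: VN.
by exists n => //; apply: SA; exact: (@S_T_sub R X T W U d WU).
Qed.

Lemma three_to_one {R : realType} {X : metricType R} (T : X -> X) :
  continuous T -> (forall y : X, exists x : X, T x = y) ->
  (exists2 delta : R, 0 < delta & exists x : X, omegaF T (SF T delta) x = [set: X]) ->
  trans_sensitive T.
Proof.
move=> hcont hsurj [d d0 [x hx]]; exists d => // U V W oU oV oW.
have key : forall W' V', opene W' -> opene V' ->
    exists m, S_T T W' d m /\ V' (iter m T x).
  move=> W' V' oW' [oV' [v Vv]].
  have : omegaF T (SF T d) x v by rewrite hx.
  move=> /(_ (S_T T W' d)) cl.
  have /cl cl' : SF T d (S_T T W' d) by exists W'; split.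
  have [_ [[m Sm <-] Vm]] := cl' V' (open_nbhs_nbhs (conj oV' Vv)).
  by exists m.
have [k [_ Uk]] := key W U oW oU.
have [W' [oW' hW']] := @shift_lemma R X T hcont hsurj d k W d0 oW.
have [m [Sm Vm]] := key W' V oW' oV.
have [le Smk] := hW' m Sm.
exists (m - k)%N; split => //; exists (iter k T x); split => //.
by rewrite /= -iterD subnK.
Qed.

Theorem proposition4p3 (R : realType) (X : metricType R) (T : X -> X)
  (hcpt : compact [set: X])
  (hnontriv : exists x y : X, x <> y)
  (hnoiso : forall x : X, ~ isolated [set: X] x)
  (hcont : continuous T)
  (hsurj : forall y : X, exists x : X, T x = y) :
  (forall delta : R, 0 < delta -> plus_invariant (SF T delta)) /\
  ((trans_sensitive T <->
     exists2 delta : R, 0 < delta & exists X0 : set X,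
       [/\ Gdelta X0, dense X0 & forall x, X0 x -> omegaF T (SF T delta) x = [set: X]]) /\
   ((exists2 delta : R, 0 < delta & exists X0 : set X,
       [/\ Gdelta X0, dense X0 & forall x, X0 x -> omegaF T (SF T delta) x = [set: X]]) <->
    exists2 delta : R, 0 < delta & exists x : X, omegaF T (SF T delta) x = [set: X])).
Proof.
have [x0 _] := hnontriv.
have two_three : (exists2 delta : R, 0 < delta & exists X0 : set X,
       [/\ Gdelta X0, dense X0 & forall x, X0 x -> omegaF T (SF T delta) x = [set: X]]) ->
    exists2 delta : R, 0 < delta & exists x : X, omegaF T (SF T delta) x = [set: X].
  move=> [d d0 [X0 [_ dX0 hX0]]]; exists d => //.
  have [x [_ X0x]] := dX0 setT (ex_intro _ x0 I) openT.
  by exists x; exact: hX0.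
split.
  move=> d d0 i A [U [oU SA]].
  have [U' [oU' hU']] := @shift_lemma R X T hcont hsurj d i U d0 oU.
  exists U'; split => // n /hU' [le Sn]; exists (n - i)%N; first exact: SA.
  exact: subnKC.
split; split.
- exact: ts_to_dense x0 hcpt hcont.
- by move=> h; apply: three_to_one => //; exact: two_three.
- exact: two_three.
- move=> h; exact: (@ts_to_dense R X T x0 hcpt hcont (@three_to_one R X T hcont hsurj h)).
Qed.
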